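(* Let $n \ge 1$ and let $S \subset \mathbb{C}^n$ be a unitary 2-design with $s = |S|$ elements. Then the tensor rank (over $\mathbb{C}$) of the matrix multiplication tensor $\mathrm{MM}_n$ is at most $s(s-1)(s-2)+1$.
   Context: For $u, v \in \mathbb{C}^n$, $|u\rangle\langle v|$ denotes the $n\times n$ matrix whose $(i,j)$ entry is $u_i \overline{v_j}$. Let $e_1,\dots,e_n$ be the standard basis of $\mathbb{C}^n$ and $E_{ab} = |e_a\rangle\langle e_b|$. The matrix multiplication tensor is $\mathrm{MM}_n = \sum_{a,b,c=1}^n E_{ab}\otimes E_{bc}\otimes E_{ca} \in \mathbb{C}^{n\times n}\otimes\mathbb{C}^{n\times n}\otimes\mathbb{C}^{n\times n}$ (equivalently, the tensor with $\langle \mathrm{MM}_n, A\otimes B\otimes C\rangle = \operatorname{tr}(ABC)$). The tensor rank of a tensor $T \in V_1\otimes V_2\otimes V_3$ is the least number $r$ such that $T$ is a sum of $r$ tensors of the form $x\otimes y\otimes z$ with $x\in V_1, y\in V_2, z \in V_3$. A finite set $S = \{w_1,\dots,w_s\} \subset \mathbb{C}^n$ is a unitary 2-design if $\sum_{i=1}^s w_i = 0$ and $\frac{1}{s}\sum_{i=1}^s |w_i\rangle\langle w_i| = \frac{1}{n}\mathbf{1}$, where $\mathbf{1}$ is the $n\times n$ identity matrix. *)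

(* Defs.v *)
From HB Require Import structures.
From mathcomp Require Import all_boot all_order all_algebra.
Set Implicit Arguments. Unset Strict Implicit. Unset Printing Implicit Defensive.
Import Order.TTheory GRing.Theory Num.Theory.
Local Open Scope ring_scope.

Definition ketbra (C : numClosedFieldType) (n : nat) (u v : 'cV[C]_n) : 'M[C]_n :=
  \matrix_(i, j) (u i 0 * (v j 0)^*).

Definition unitary_2design (C : numClosedFieldType) (n : nat) (S : seq 'cV[C]_n) : Prop :=
  [/\ uniq S,
      \sum_(w <- S) w = 0
    & (size S)%:R^-1 *: \sum_(w <- S) ketbra w w = n%:R^-1 *: (1%:M : 'M[C]_n)].

(* A tensor in M_n(C) (x) M_n(C) (x) M_n(C), in coordinates w.r.t. the
   basis E_ij (x) E_kl (x) E_pq: T i j k l p q. *)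
Definition tensor3 (C : Type) (n : nat) :=
  'I_n -> 'I_n -> 'I_n -> 'I_n -> 'I_n -> 'I_n -> C.

Definition rank1 (C : numClosedFieldType) (n : nat) (x y z : 'M[C]_n) : tensor3 C n :=
  fun i j k l p q => x i j * y k l * z p q.

Definition MM (C : numClosedFieldType) (n : nat) : tensor3 C n :=
  fun i j k l p q =>
    \sum_(a < n) \sum_(b < n) \sum_(c < n)
      rank1 (delta_mx a b) (delta_mx b c) (delta_mx c a) i j k l p q.

Definition tensor_rank_le (C : numClosedFieldType) (n : nat) (T : tensor3 C n) (N : nat) : Prop :=
  exists r : nat, (r <= N)%N /\
    exists x y z : 'I_r -> 'M[C]_n,
      forall i j k l p q,
        T i j k l p q = \sum_(t < r) rank1 (x t) (y t) (z t) i j k l p q.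

(* Main.v *)
Require Import Defs.
From HB Require Import structures.
From mathcomp Require Import all_boot all_order all_algebra.
From mathcomp Require Import ring zify.
Set Implicit Arguments. Unset Strict Implicit. Unset Printing Implicit Defensive.
Import Order.TTheory GRing.Theory Num.Theory.
Local Open Scope ring_scope.

Section Aux.
Variable C : numClosedFieldType.
Variable n : nat.

Lemma trl_ext (T T' : tensor3 C n) N :
  (forall i j k l p q, T i j k l p q = T' i j k l p q) ->
  tensor_rank_le T' N -> tensor_rank_le T N.
Proof.
move=> E [r [hr [x [y [z H]]]]]; exists r; split=> //; exists x, y, z.
by move=> i j k l p q; rewrite E H.
Qed.

Lemma trl_rank1 (x y z : 'M[C]_n) : tensor_rank_le (rank1 x y z) 1.
Proof.
exists 1%N; split=> //; exists (fun _ => x), (fun _ => y), (fun _ => z).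
by move=> i j k l p q; rewrite big_ord1.
Qed.

Lemma trl0 : @tensor_rank_le C n (fun _ _ _ _ _ _ => 0) 0.
Proof.
exists 0%N; split=> //; exists (fun _ => 0), (fun _ => 0), (fun _ => 0).
by move=> i j k l p q; rewrite big_ord0.
Qed.

Lemma trlD (T1 T2 : tensor3 C n) N1 N2 :
  tensor_rank_le T1 N1 -> tensor_rank_le T2 N2 ->
  @tensor_rank_le C n (fun i j k l p q => T1 i j k l p q + T2 i j k l p q) (N1 + N2).
Proof.
move=> [r1 [h1 [x1 [y1 [z1 H1]]]]] [r2 [h2 [x2 [y2 [z2 H2]]]]].
exists (r1 + r2)%N; split; first by rewrite leq_add.
exists (fun t => match split t with inl a => x1 a | inr b => x2 b end).
exists (fun t => match split t with inl a => y1 a | inr b => y2 b end).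
exists (fun t => match split t with inl a => z1 a | inr b => z2 b end).
move=> i j k l p q; rewrite big_split_ord H1 H2 /=.
congr (_ + _); apply: eq_bigr => t _.
  by rewrite /rank1 (unsplitK (inl t : _ + 'I_r2)).
by rewrite /rank1 (unsplitK (inr t : 'I_r1 + _)).

Qed.

Lemma trl_sum m (T : 'I_m -> tensor3 C n) N :
  (forall a, tensor_rank_le (T a) N) ->
  @tensor_rank_le C n (fun i j k l p q => \sum_(a < m) T a i j k l p q) (m * N).
Proof.
elim: m T => [|m IH] T HT.
  rewrite mul0n; eapply trl_ext; last exact: trl0.
  by move=> *; rewrite big_ord0.
rewrite mulSn; apply: trl_ext (trlD (HT ord0) (IH _ (fun a => HT (lift ord0 a)))).
by move=> i j k l p q; rewrite big_ord_recl.
Qed.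

Lemma trl_scale (c : C) (x y z : 'M[C]_n) :
  @tensor_rank_le C n (fun i j k l p q => c * rank1 x y z i j k l p q) 1.
Proof.
apply: trl_ext (trl_rank1 (c *: x) y z) => i j k l p q.
by rewrite /rank1 mxE !mulrA.
Qed.

End Aux.

Section Main.
Variable C : numClosedFieldType.
Variable n : nat.
Variable S : seq 'cV[C]_n.
Hypothesis n1 : (1 <= n)%N.
Hypothesis s0 : \sum_(w <- S) w = 0.
Hypothesis des : (size S)%:R^-1 *: \sum_(w <- S) ketbra w w = n%:R^-1 *: (1%:M : 'M[C]_n).

Local Notation s := (size S).
Definition W (a : 'I_s) : 'cV[C]_n := nth 0 S a.
Definition dl (i j : 'I_n) : C := (i == j)%:R.
Definition ka : C := s%:R / n%:R.

Lemma sumW i : \sum_(a < s) W a i 0 = 0.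
Proof.
rewrite -summxE; move: s0; rewrite (big_nth 0) big_mkord => ->; by rewrite mxE.
Qed.

Lemma n0 : n%:R != 0 :> C.
Proof. by rewrite pnatr_eq0 -lt0n. Qed.

Lemma entry i j : s%:R^-1 * \sum_(a < s) W a i 0 * (W a j 0)^* = n%:R^-1 * dl i j.
Proof.
have := congr1 (fun M : 'M[C]_n => M i j) des.
rewrite /= !mxE summxE (big_nth 0) big_mkord => H.
rewrite /dl -H; congr (_ * _); apply: eq_bigr => a _; by rewrite mxE.
Qed.

Lemma s_pos : s%:R != 0 :> C.
Proof.
apply/negP => /eqP e.
have i : 'I_n by exists 0%N.
have := entry i i; rewrite e invr0 mul0r /dl eqxx mulr1 => /esym/eqP.
by rewrite invr_eq0 (negbTE n0).
Qed.

Lemma mom i j : \sum_(a < s) W a i 0 * (W a j 0)^* = ka * dl i j.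
Proof.
have := entry i j => /(congr1 (fun x => s%:R * x)).
by rewrite mulrA mulfV ?s_pos // mul1r /ka mulrA => ->; rewrite mulrAC.
Qed.


Definition X (a b : 'I_s) : 'M[C]_n := ketbra (W a) (W a - W b).

Lemma XE a b i j : X a b i j = W a i 0 * ((W a j 0)^* - (W b j 0)^*).
Proof. by rewrite /X /ketbra !mxE rmorphB. Qed.

Definition S3 (F : 'I_s -> 'I_s -> 'I_s -> C) :=
  \sum_(a < s) \sum_(b < s) \sum_(c < s) F a b c.

Lemma S3D F G : S3 (fun a b c => F a b c + G a b c) = S3 F + S3 G.
Proof.
rewrite /S3 -big_split; apply: eq_bigr => a _; rewrite -big_split.
by apply: eq_bigr => b _; rewrite -big_split.
Qed.

Lemma S3sep f g h : S3 (fun a b c => f a * g b * h c) =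
  (\sum_(a < s) f a) * (\sum_(b < s) g b) * (\sum_(c < s) h c).
Proof.
rewrite /S3 !big_distrl /=; apply: eq_bigr => a _.
rewrite -mulrA big_distrl big_distrr /=; apply: eq_bigr => b _.
by rewrite mulrA big_distrr.
Qed.

Lemma dlC i j : dl i j = dl j i.
Proof. by rewrite /dl eq_sym. Qed.

Lemma key i j k l p q :
  S3 (fun a b c => X a b i j * X b c k l * X c a p q) =
  ka ^+ 3 * (dl i j * dl k l * dl p q - dl j k * dl l p * dl q i).
Proof.
have -> : S3 (fun a b c => X a b i j * X b c k l * X c a p q) = S3 (fun a b c =>
 (W a i 0 * (W a j 0)^*) * (W b k 0 * (W b l 0)^*) * (W c p 0 * (W c q 0)^*) +
 ((-(W a i 0 * (W a j 0)^* * (W a q 0)^*)) * (W b k 0 * (W b l 0)^*) * (W c p 0) +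
 ((-(W a i 0 * (W a j 0)^*)) * (W b k 0) * ((W c l 0)^* * W c p 0 * (W c q 0)^*) +
 ((W a i 0 * (W a j 0)^* * (W a q 0)^*) * (W b k 0) * ((W c l 0)^* * W c p 0) +
 ((W a i 0) * (-((W b j 0)^* * W b k 0 * (W b l 0)^*)) * (W c p 0 * (W c q 0)^*) +
 ((W a i 0 * (W a q 0)^*) * ((W b j 0)^* * W b k 0 * (W b l 0)^*) * (W c p 0) +
 ((W a i 0) * ((W b j 0)^* * W b k 0) * ((W c l 0)^* * W c p 0 * (W c q 0)^*) +
 (-(W a i 0 * (W a q 0)^*)) * (W b k 0 * (W b j 0)^*) * (W c p 0 * (W c l 0)^*)))))))).
  rewrite /S3; apply: eq_bigr => a _; apply: eq_bigr => b _; apply: eq_bigr => c _.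
  rewrite !XE; ring.
rewrite !S3D !S3sep !sumW !sumrN !mom (dlC i q) (dlC k j) (dlC p l).
ring.
Qed.


Lemma MME i j k l p q : @MM C n i j k l p q = dl j k * dl l p * dl q i.
Proof.
rewrite /MM /rank1.
rewrite (bigD1 q) //= [X in _ + X]big1 ?addr0; last first.
  move=> a /negbTE na; apply: big1 => b _; apply: big1 => c _.
  by rewrite !mxE [q == a]eq_sym na andbF !mulr0.
rewrite (bigD1 j) //= [X in _ + X]big1 ?addr0; last first.
  move=> b /negbTE nb; apply: big1 => c _.
  by rewrite !mxE [j == b]eq_sym nb andbF !mul0r.
rewrite (bigD1 l) //= [X in _ + X]big1 ?addr0; last first.
  move=> c /negbTE nc; by rewrite !mxE [l == c]eq_sym nc andbF mulr0 mul0r.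
rewrite !mxE !eqxx /dl !andbT.
rewrite (eq_sym j k) (eq_sym l p) (eq_sym q i); ring.
Qed.

Lemma X0 a i j : X a a i j = 0.
Proof. by rewrite XE subrr mulr0. Qed.

Lemma S3_red F : (forall a c, F a a c = 0) -> (forall a b, F a b b = 0) ->
  (forall a b, F a b a = 0) ->
  S3 F = \sum_(a < s) \sum_(b < s.-1) \sum_(c < s.-1.-1)
           F a (lift a b) (lift a (lift b c)).
Proof.
move=> H1 H2 H3; rewrite /S3; apply: eq_bigr => a _.
rewrite (bigD1_ord a) //= [X in X + _]big1; last by move=> c _; rewrite H1.
rewrite add0r; apply: eq_bigr => b _.
rewrite (bigD1_ord a) //= H3 add0r (bigD1_ord b) //= H2 add0r.
by [].
Qed.

Lemma ka0 : ka != 0.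
Proof. by rewrite /ka mulf_neq0 ?invr_eq0 ?s_pos ?n0. Qed.

Lemma decomp i j k l p q : @MM C n i j k l p q =
  rank1 1%:M 1%:M 1%:M i j k l p q +
  \sum_(a < s) \sum_(b < s.-1) \sum_(c < s.-1.-1)
     (- ka ^- 3) * rank1 (X a (lift a b)) (X (lift a b) (lift a (lift b c)))
                         (X (lift a (lift b c)) a) i j k l p q.
Proof.
have E := key i j k l p q.
rewrite S3_red in E; try by move=> *; rewrite !X0 ?mul0r ?mulr0 ?mul0r.
rewrite /rank1.
under eq_bigr => a _ do under eq_bigr => b _ do rewrite -mulr_sumr.
under eq_bigr => a _ do rewrite -mulr_sumr.
rewrite -mulr_sumr E MME mulrA mulNr mulVf ?expf_neq0 ?ka0 // mulN1r.
rewrite !mxE /dl; ring.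
Qed.

End Main.

Lemma trl_mono (C : numClosedFieldType) n (T : tensor3 C n) N N' :
  (N <= N')%N -> tensor_rank_le T N -> tensor_rank_le T N'.
Proof.
move=> h [r [hr rest]]; exists r; split=> //; exact: leq_trans hr h.
Qed.

Theorem theorem1 (C : numClosedFieldType) (n : nat) (S : seq 'cV[C]_n) :
  (1 <= n)%N ->
  unitary_2design S ->
  tensor_rank_le (@MM C n) ((size S) * (size S - 1) * (size S - 2) + 1)%N.
Proof.
move=> n1 [_ s0 des].
have B := trlD (trl_rank1 (1%:M : 'M[C]_n) 1%:M 1%:M)
  (trl_sum (fun a => trl_sum (fun b => trl_sum (fun c =>
     trl_scale (- ka S ^- 3)
       (X a (lift a b)) (X (lift a b) (lift a (lift b c))) (X (lift a (lift b c)) a))))).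
have B' := trl_ext (fun i j k l p q => decomp n1 s0 des i j k l p q) (B S).
apply: trl_mono B'.
rewrite !muln1 -!subn1 -subnDA; lia.
Qed.
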